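(* For any $u\equiv 4,8\pmod{12}$ and $v\equiv 2,4\pmod 6$, there is no perfect 2-D $(u\times v,4,2)$-OOC.
   Context: A 2-D $(u\times v,4,2)$-OOC is a family $\mathcal C$ of $u\times v$ $(0,1)$-matrices of Hamming weight $4$ such that for all $A=(a_{ij}),B=(b_{ij})\in\mathcal C$ and integers $r$ with $A\ne B$ or $r\not\equiv0\pmod v$, $\sum_{i,j}a_{ij}b_{i,j+r}\le 2$ (column indices mod $v$). It is perfect if it has exactly $u(uv-1)(uv-2)/24$ codewords (equivalently, the cyclic column shifts of its codewords' supports cover each $3$-subset of $I_u\times Z_v$ exactly once). *)

(* Defs.v *)
From mathcomp Require Import all_boot.
Set Implicit Arguments. Unset Strict Implicit. Unset Printing Implicit Defensive.

(* A u x v (0,1)-matrix is represented by its support, a subset of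
   I_u x Z_v (rows 'I_u, columns 'I_v read modulo v). *)
Definition matrix01 (u v : nat) := {set 'I_u * 'I_v}.

Definition hweight u v (A : matrix01 u v) : nat := #|A|.

(* sum_{i,j} a_{ij} b_{i,j+r}, column index j+r taken mod v. *)
Definition corr u v (A B : matrix01 u v) (r : nat) : nat :=
  #|[set x in A | [exists y in B, (y.1 == x.1) && (nat_of_ord y.2 == (x.2 + r) %% v)]]|.

(* 2-D (u x v, 4, 2)-OOC.  Shifts r range over nat, which covers all
   residues mod v. *)
Definition is_OOC_4_2 u v (C : {set matrix01 u v}) : Prop :=
  (forall A, A \in C -> hweight A = 4) /\
  (forall A B r, A \in C -> B \in C -> (A != B) || (r %% v != 0) ->
     corr A B r <= 2).

Definition perfect_OOC_4_2 u v (C : {set matrix01 u v}) : Prop :=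
  is_OOC_4_2 C /\ #|C| = u * (u * v - 1) * (u * v - 2) %/ 24.

(* Main.v *)
Require Import Defs.
From mathcomp Require Import all_boot zify ring.
Set Implicit Arguments. Unset Strict Implicit. Unset Printing Implicit Defensive.


Definition shp u n (s : nat) (x : 'I_u * 'I_n.+1) : 'I_u * 'I_n.+1 :=
  (x.1, inord ((x.2 + s) %% n.+1)).
Definition shS u n (s : nat) (A : {set 'I_u * 'I_n.+1}) := shp s @: A.

Lemma shp_val u n s (x : 'I_u * 'I_n.+1) : ((shp s x).2 : nat) = (x.2 + s) %% n.+1.
Proof. by rewrite /shp /= inordK // ltn_pmod. Qed.

Lemma shp_inj u n s : injective (@shp u n s).
Proof.
move=> [a b] [c d] E.
have E1 : a = c by move: E => [].
have E2 := congr1 (fun y => nat_of_ord y.2) E.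
rewrite !shp_val /= in E2.
move/eqP: E2; rewrite eqn_modDr !modn_small // => /eqP E2.
by rewrite E1; congr pair; apply: val_inj.
Qed.

Lemma shpD u n s t (x : 'I_u * 'I_n.+1) : shp s (shp t x) = shp (t + s) x.
Proof.
case: x => a b; rewrite /shp /=; congr pair; apply: val_inj.
by rewrite /= !inordK ?ltn_pmod // modnDml addnA.
Qed.

Lemma shp_mod u n s (x : 'I_u * 'I_n.+1) : shp (s %% n.+1) x = shp s x.
Proof.
case: x => a b; rewrite /shp /=; congr pair; apply: val_inj.
by rewrite /= !inordK ?ltn_pmod // modnDmr.
Qed.

Lemma shp0 u n (x : 'I_u * 'I_n.+1) : shp n.+1 x = x.
Proof.
case: x => a b; rewrite /shp /=; congr pair; apply: val_inj.
by rewrite /= !inordK ?ltn_pmod // modnDr modn_small.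
Qed.

Lemma shSD u n s t (A : {set 'I_u * 'I_n.+1}) : shS s (shS t A) = shS (t + s) A.
Proof. by rewrite /shS -imset_comp; apply: eq_imset => x /=; rewrite shpD. Qed.

Lemma shS_mod u n s (A : {set 'I_u * 'I_n.+1}) : shS (s %% n.+1) A = shS s A.
Proof. by rewrite /shS; apply: eq_imset => x /=; rewrite shp_mod. Qed.

Lemma shS0 u n (A : {set 'I_u * 'I_n.+1}) : shS n.+1 A = A.
Proof. by rewrite /shS (eq_imset _ (@shp0 u n)) imset_id. Qed.

Lemma card_shS u n s (A : {set 'I_u * 'I_n.+1}) : #|shS s A| = #|A|.
Proof. by rewrite /shS card_imset //; apply: shp_inj. Qed.

Lemma shSI u n s (A B : {set 'I_u * 'I_n.+1}) : shS s (A :&: B) = shS s A :&: shS s B.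
Proof. by rewrite /shS imsetI // => x y _ _; apply: shp_inj. Qed.

Lemma mem_shS u n s (A : {set 'I_u * 'I_n.+1}) x : (shp s x \in shS s A) = (x \in A).
Proof. by rewrite /shS mem_imset //; apply: shp_inj. Qed.

Lemma corr_eq u n (A B : {set 'I_u * 'I_n.+1}) r : corr A B r = #|shS r A :&: B|.
Proof.
rewrite /corr.
have -> : shS r A :&: B = shp r @: [set x in A | shp r x \in B].
  apply/setP => y; rewrite !inE; apply/andP/imsetP.
    by move=> [/imsetP [x xA ->] yB]; exists x => //; rewrite inE xA.
  by move=> [x]; rewrite inE => /andP [xA xB] ->; rewrite mem_shS.
rewrite card_imset; last exact: shp_inj.
apply: eq_card => x; rewrite !inE; congr andb.
apply/existsP/idP.
  move=> [y /andP [yB /andP [/eqP E1 /eqP E2]]].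
  suff -> : shp r x = y by [].
  case: y yB E1 E2 => a b /= _ -> E2; rewrite /shp; congr pair; apply: val_inj.
  by rewrite /= inordK ?ltn_pmod.
move=> H; exists (shp r x); rewrite H /= eqxx /=.
by rewrite shp_val.
Qed.


Lemma disj u n (C : {set matrix01 u n.+1}) : is_OOC_4_2 C ->
  forall A B (s t : 'I_n.+1), A \in C -> B \in C ->
  3 <= #|shS s A :&: shS t B| -> A = B /\ s = t.
Proof.
move=> [_ hC] A B s t AC BC H.
rewrite -(card_shS (n.+1 - t)) shSI !shSD subnKC ?shS0 in H; last exact: ltnW.
rewrite -corr_eq in H.
have := hC A B (s + (n.+1 - t)) AC BC.
case E: ((A != B) || ((s + (n.+1 - t)) %% n.+1 != 0)).
  by move=> /(_ isT) H2; lia.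
move=> _; move/negbT: E; rewrite negb_or !negbK => /andP [/eqP -> /eqP E].
split => //; apply: val_inj => /=.
have hs := ltn_ord s; have ht := ltn_ord t.
have [le|lt] := leqP t s.
  move: E; rewrite (_ : s + (n.+1 - t) = (s - t) + n.+1); last lia.
  by rewrite modnDr modn_small; lia.
by move: E; rewrite modn_small; lia.
Qed.


Definition Jset u n (C : {set matrix01 u n.+1}) : {set {set 'I_u * 'I_n.+1} * 'I_n.+1} :=
  setX C setT.
Definition cnt u n (C : {set matrix01 u n.+1}) (T : {set 'I_u * 'I_n.+1}) :=
  #|[set j in Jset C | T \subset shS j.2 j.1]|.
Definition Trip u n := [set T : {set 'I_u * 'I_n.+1} | #|T| == 3].

Lemma sumb_card (I : finType) (A : {set I}) (b : pred I) :
  \sum_(i in A) (b i : nat) = #|[set i in A | b i]|.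
Proof.
rewrite -sum1_card big_mkcond [RHS]big_mkcond /=; apply: eq_bigr => i _.
by rewrite !inE; case: (i \in A); case: (b i).
Qed.

Lemma cnt_le1 u n (C : {set matrix01 u n.+1}) (T : {set 'I_u * 'I_n.+1}) : is_OOC_4_2 C -> #|T| = 3 -> cnt C T <= 1.
Proof.
move=> hC HT; apply/card_le1_eqP => j k; rewrite !inE => /andP [/andP [jC _] Tj] /andP [/andP [kC _] Tk].
have H : 3 <= #|shS j.2 j.1 :&: shS k.2 k.1|.
  by rewrite -HT; apply: subset_leq_card; rewrite subsetI Tj Tk.
have [E1 E2] := disj hC jC kC H.
by case: j k E1 E2 {jC kC Tj Tk H} => a b [c d] /= -> ->.
Qed.

Lemma sum_cnt u n (C : {set matrix01 u n.+1}) : is_OOC_4_2 C ->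
  \sum_(T in Trip u n) cnt C T = 4 * #|Jset C|.
Proof.
move=> [hw _].
under eq_bigr => T _ do rewrite /cnt -sumb_card.
rewrite exchange_big /=.
rewrite (eq_bigr (fun _ => 4)); first by rewrite sum_nat_const mulnC.
move=> j; rewrite inE => /andP [jC _].
rewrite sumb_card.
rewrite (_ : #|_| = #|[set T : {set 'I_u * 'I_n.+1} | T \subset shS j.2 j.1 & #|T| == 3]|).
  by rewrite cards_draws card_shS -[#|j.1|]/(hweight j.1) (hw _ jC).
by apply: eq_card => T; rewrite !inE andbC.
Qed.

Lemma cover3 u n (C : {set matrix01 u n.+1}) : is_OOC_4_2 C ->
  4 * #|Jset C| = #|Trip u n| ->
  forall T : {set 'I_u * 'I_n.+1}, #|T| = 3 -> cnt C T = 1.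
Proof.
move=> hC E T HT.
have L := @leqif_sum _ (fun T => T \in Trip u n) (fun T => cnt C T == 1) (cnt C) (fun _ => 1).
have [_] : \sum_(T | T \in Trip u n) cnt C T <= \sum_(T | T \in Trip u n) 1
     ?= iff [forall (T | T \in Trip u n), cnt C T == 1].
  apply: L => T0; rewrite inE => /eqP H0; split; first exact: cnt_le1.
  by [].
rewrite sum_cnt // E sum1_card eqxx => /esym /forallP /(_ T) /implyP.
by rewrite inE HT eqxx => /(_ isT) /eqP.
Qed.


Lemma arith u V : (u %% 12 == 4) || (u %% 12 == 8) -> (V %% 6 == 2) || (V %% 6 == 4) ->
  4 * (u * (u * V - 1) * (u * V - 2) %/ 24 * V) = 'C(u * V, 3).
Proof.
move=> hu hV.
have u4 : 4 %| u by move: hu => /orP [] /eqP; lia.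
have u3 : ~~ (3 %| u) by move: hu => /orP [] /eqP; lia.
have V3 : ~~ (3 %| V) by move: hV => /orP [] /eqP; lia.
have Vp : 0 < V by move: hV => /orP [] /eqP; lia.
have up : 0 < u by move: hu => /orP [] /eqP; lia.
have N3 : ~~ (3 %| u * V) by rewrite Euclid_dvdM // negb_or u3 V3.
have u2 : 2 %| u by apply: dvdn_trans u4.
have N2 : 2 %| u * V - 2 by rewrite dvdn_sub // dvdn_mulr.
have d8 : 8 %| u * (u * V - 2) by rewrite (_ : 8 = 4 * 2) // dvdn_mul.
have d3 : 3 %| (u * V - 1) * (u * V - 2).
  move: N3; set N := u * V => N3.
  have [r1|r2] : N %% 3 = 1 \/ N %% 3 = 2 by move: N3; lia.
    by apply: dvdn_mulr; lia.
  by apply: dvdn_mull; lia.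
have d24 : 24 %| u * (u * V - 1) * (u * V - 2).
  rewrite (_ : 24 = 8 * 3) // Gauss_dvd //; apply/andP; split.
    by rewrite mulnAC dvdn_mulr.
  by rewrite -mulnA dvdn_mull.
have [M EM] : exists M, u * V = M.+2.
  exists (u * V - 2); have : 2 <= u * V by rewrite -(muln1 2) leq_mul //; lia.
  lia.
move: d24; rewrite EM => d24.
apply/eqP; rewrite -(eqn_pmul2r (_ : 0 < 6)) //.
rewrite (_ : 6 = 3`!) // bin_ffact !ffactnS ffactn0 /=.
set q := _ %/ 24.
have Eq : q * 24 = u * (M.+2 - 1) * (M.+2 - 2) by rewrite divnK.
rewrite !subSS !subn0 in Eq.
apply/eqP.
have -> : 4 * (q * V) * 6 = q * 24 * V by ring.
rewrite Eq -EM; ring.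
Qed.


Lemma close u n h (p0 q0 : 'I_u * 'I_n.+1) (A : {set 'I_u * 'I_n.+1}) s :
  shp h p0 = q0 -> shp h q0 = p0 ->
  [set p0; q0] \subset shS s A -> [set p0; q0] \subset shS (s + h) A.
Proof.
move=> e1 e2; rewrite !subUset !sub1set -shSD => /andP [H1 H2].
by apply/andP; split; [rewrite -e2 mem_shS | rewrite -e1 mem_shS].
Qed.

Lemma uV_count u n (C : {set matrix01 u n.+1}) (P : {set 'I_u * 'I_n.+1}) :
  is_OOC_4_2 C -> 4 * #|Jset C| = #|Trip u n| -> #|P| = 2 ->
  #|~: P| = 2 * #|[set j in Jset C | P \subset shS j.2 j.1]|.
Proof.
move=> hC E HP.
have [hw _] := hC.
rewrite -sum1_card.
rewrite (eq_bigr (fun z => cnt C (z |: P))); last first.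
  move=> z; rewrite inE => zP; rewrite (cover3 hC E) //.
  by rewrite cardsU1 zP HP.
under eq_bigr => z _ do rewrite /cnt -sumb_card.
rewrite exchange_big /=.
rewrite (eq_bigr (fun j : {set 'I_u * 'I_n.+1} * 'I_n.+1 => (P \subset shS j.2 j.1) + (P \subset shS j.2 j.1))); last first.
  move=> j; rewrite inE => /andP [jC _].
  rewrite sumb_card.
  case PK: (P \subset shS j.2 j.1).
    rewrite (_ : [set _ in _ | _] = shS j.2 j.1 :\: P).
      rewrite cardsD (setIidPr PK) card_shS -[#|j.1|]/(hweight j.1) (hw _ jC) HP //.
    by apply/setP => z; rewrite !inE subUset sub1set PK andbT andbC.
  rewrite (_ : [set _ in _ | _] = set0) ?cards0 //.
  by apply/setP => z; rewrite !inE subUset PK !andbF.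
by rewrite big_split /= sumb_card addnn -muln2 mulnC.
Qed.

Lemma parity u n h (C : {set matrix01 u n.+1}) (p0 q0 : 'I_u * 'I_n.+1) :
  shp h p0 = q0 -> shp h q0 = p0 -> n.+1 = h + h ->
  ~~ odd #|[set j in Jset C | [set p0; q0] \subset shS j.2 j.1]|.
Proof.
move=> e1 e2 eV.
set P := [set p0; q0]. set S := [set j in Jset C | _].
pose B := [set j : {set 'I_u * 'I_n.+1} * 'I_n.+1 | j.2 < h].
have hV : h < n.+1 by lia.
suff E : #|S :&: B| = #|S :\: B|.
  by rewrite -(cardsID B S) E addnn odd_double.
apply/eqP; rewrite eqn_leq; apply/andP; split.
  pose g (j : {set 'I_u * 'I_n.+1} * 'I_n.+1) := (j.1, inord (j.2 + h) : 'I_n.+1).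
  rewrite -(@card_in_imset _ _ g (S :&: B)).
    apply: subset_leq_card; apply/subsetP => k /imsetP [j jS ->].
    move: jS; rewrite !inE /= andbT => /andP [/andP [jC jP] jh].
    rewrite inordK; last by lia.
    rewrite jC -leqNgt leq_addl /=.
    exact: close.
  move=> [a b] [c d]; rewrite !inE /= !andbT => /andP [_ bh] /andP [_ dh] [-> /(congr1 val)].
  rewrite /= !inordK; try lia.
  by move=> E; congr pair; apply: val_inj => /=; lia.
pose g (j : {set 'I_u * 'I_n.+1} * 'I_n.+1) := (j.1, inord (j.2 - h) : 'I_n.+1).
rewrite -(@card_in_imset _ _ g (S :\: B)).
  apply: subset_leq_card; apply/subsetP => k /imsetP [j jS ->].
  move: jS; rewrite !inE /= andbT -leqNgt => /andP [jh /andP [jC jP]].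
  have jlt := ltn_ord j.2.
  rewrite inordK; last exact: leq_ltn_trans (leq_subr _ _) jlt.
  rewrite jC (_ : j.2 - h < h); last by rewrite ltn_subLR // -eV.
  rewrite /=.
  have := close e1 e2 jP.
  have e3 : forall t, h <= t -> t + h = t - h + (h + h) by move=> t ht; lia.
  rewrite -shS_mod (e3 _ jh) -eV.
  rewrite modnDr modn_small; last exact: leq_ltn_trans (leq_subr _ _) jlt.
  by rewrite andbT.
move=> [a b] [c d]; rewrite !inE /= !andbT -!leqNgt => /andP [bh _] /andP [dh _] [-> /(congr1 val)].
have hb := ltn_ord b; have hd := ltn_ord d.
rewrite /= !inordK ?(leq_ltn_trans (leq_subr _ _) hb) ?(leq_ltn_trans (leq_subr _ _) hd) //.
move=> E; congr pair; apply: val_inj => /=.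
by rewrite -(subnK bh) -(subnK dh) E.
Qed.


Unset Implicit Arguments.
Theorem corollary5p5 (u v : nat) :
  (u %% 12 == 4) || (u %% 12 == 8) ->
  (v %% 6 == 2) || (v %% 6 == 4) ->
  ~ (exists C : {set matrix01 u v}, perfect_OOC_4_2 C).
Proof.
move=> hu hV [C [hC hcard]].
move: C hC hcard; case: v hV => [|n] hV //= C hC hcard.
have E : 4 * #|Jset C| = #|Trip u n|.
  rewrite /Jset /Trip cardsX (_ : #|[set: _]| = n.+1); last exact: (etrans (cardsT _) (card_ord _)).
  rewrite card_draws card_prod !card_ord hcard.
  exact: arith.
have up : 0 < u by move: hu => /orP [] /eqP; lia.
have u4 : 4 %| u by move: hu => /orP [] /eqP; lia.
have [h eV] : exists h, n.+1 = h + h.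
  by exists (n.+1 %/ 2); move: hV => /orP [] /eqP; lia.
have hV' : h < n.+1 by lia.
pose i0 : 'I_u := Ordinal up.
pose p0 : 'I_u * 'I_n.+1 := (i0, ord0).
pose q0 : 'I_u * 'I_n.+1 := (i0, inord h).
have e1 : shp h p0 = q0 by rewrite /shp /= add0n modn_small.
have e2 : shp h q0 = p0.
  rewrite /shp /=; congr pair; apply: val_inj.
  by rewrite /= !inordK // -eV modnn.
have pq : p0 != q0.
  apply/eqP => /(congr1 (fun x => nat_of_ord x.2)); rewrite /= inordK //; lia.
have HP : #|[set p0; q0]| = 2 by rewrite cards2 pq.
have H1 := uV_count hC E HP.
have H2 := parity C e1 e2 eV.
have H3 := cardsC [set p0; q0].
rewrite card_prod !card_ord in H3.
have N4 : 4 %| u * n.+1 by apply: dvdn_mulr.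
have Np : 0 < u * n.+1 by rewrite muln_gt0 up.
move/negbTE: H2 => H2.
have H4 := modn2 #|[set j in Jset C | [set p0; q0] \subset shS j.2 j.1]|.
rewrite H2 in H4.
move: H4.
move: H1 H3 N4 Np HP.
set x := #|[set j in _ | _]|; set N := u * n.+1; set y := #|~: _|; set z := #|[set p0; q0]|.
lia.
Qed.
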